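(* Let $(G,\prec)$ be an $\mathcal{H}$-free ordered graph and let $V[x,y]$ be a valid segment. Then the set $S(x,y)\cup\{x,y\}$ induces a capped ordered subgraph of $(G,\prec)$.
   Context: An ordered graph is a pair $(G,\prec)$ with $G$ a finite graph and $\prec$ a linear order on $V(G)$; induced subgraphs carry the restricted order. It is capped if for any $a\prec b\prec c\prec d$ with $ac,bd\in E(G)$ we have $ad\in E(G)$. For $a\prec b\prec c\prec d$ with $ac,bd\in E(G)$, $ac$ crosses $bd$. A rotation of $\prec$ is any order obtained by repeatedly making the largest element the smallest. For $u\prec v$, a crossing sequence from $u$ to $v$ is a sequence of distinct edges $e_1,\dots,e_k$ with $u$ the smaller end of $e_1$, $v$ the larger end of $e_k$, and $e_i$ crossing $e_{i+1}$ for $1\le i<k$; if $v\prec u$, a crossing sequence from $u$ to $v$ is one with respect to any rotation $\prec'$ of $\prec$ with $u\prec'v$. $\mathcal{H}$ is the family of ordered graphs containing two non-adjacent vertices $u,v$ with a crossing sequence from $u$ to $v$ and one from $v$ to $u$; $\mathcal{H}$-free means no induced ordered subgraph lies in $\mathcal{H}$. For $x\prec y$, the segment $V[x,y]$ is the set of vertices $v$ with $x\preceq v\preceq y$; similarly $V[x,y)$, $V(x,y]$, $V(x,y)$ denote the half-open and open versions. $V[x,y]$ is valid if there is a crossing sequence from $y$ to $x$. A vertex $v$ is left-reachable from $V[x,y]$ if $v\in V[x,y)$ and there is a crossing sequence from $y$ to $v$; right-reachable if $v\in V(x,y]$ and there is a crossing sequence from $v$ to $x$; $S(x,y)$ denotes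 the set of vertices that are both left- and right-reachable from $V[x,y]$. *)

(* Defs.v *)
From mathcomp Require Import all_boot.
Set Implicit Arguments.
Unset Strict Implicit.
Unset Printing Implicit Defensive.

(* An ordered graph: a finite type T of vertices, a symmetric irreflexive
   adjacency relation E, and a strict linear order r (r x y means x ≺ y).
   Induced ordered subgraphs are given by a vertex set W : {set T}; all
   notions below are relative to W, with edges and order restricted to W. *)

Section OrderedGraphs.
Variable T : finType.

Definition strict_linear_order (r : rel T) : Prop :=
  [/\ irreflexive r, transitive r & forall x y, x != y -> r x y || r y x].

Definition is_max (W : {set T}) (r : rel T) (z : T) : bool :=
  (z \in W) && [forall w in W, ~~ r z w].

(* one rotation step (on W): the largest element becomes the smallest *)
Definition rot_step (W : {set T}) (r : rel T) : rel T :=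
  fun x y => if is_max W r y then false else if is_max W r x then true else r x y.

Definition rotation (W : {set T}) (r : rel T) (k : nat) : rel T :=
  iter k (rot_step W) r.

Definition is_edge (W : {set T}) (E : rel T) (r : rel T) (e : T * T) : bool :=
  [&& e.1 \in W, e.2 \in W, E e.1 e.2 & r e.1 e.2].

Definition crosses (r : rel T) (e f : T * T) : bool :=
  [&& r e.1 f.1, r f.1 e.2 & r e.2 f.2].

Definition crossing_seq (W : {set T}) (E : rel T) (r : rel T) (u v : T)
    (s : seq (T * T)) : bool :=
  if s is e :: s' then
    [&& uniq s, all (is_edge W E r) s, e.1 == u, (last e s').2 == v
      & path (crosses r) e s']
  else false.

Definition has_cs (W : {set T}) (E : rel T) (r : rel T) (u v : T) : Prop :=
  (r u v /\ exists s, crossing_seq W E r u v s) \/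
  (r v u /\ exists k, rotation W r k u v /\
            exists s, crossing_seq W E (rotation W r k) u v s).

Definition H_free (E : rel T) (r : rel T) : Prop :=
  forall (W : {set T}) (u v : T), u \in W -> v \in W -> ~~ E u v ->
    has_cs W E r u v -> has_cs W E r v u -> False.

Definition capped_on (E : rel T) (r : rel T) (P : T -> Prop) : Prop :=
  forall a b c d, P a -> P b -> P c -> P d ->
    r a b -> r b c -> r c d -> E a c -> E b d -> E a d.

Definition valid_segment (E : rel T) (r : rel T) (x y : T) : Prop :=
  has_cs [set: T] E r y x.

Definition left_reachable (E : rel T) (r : rel T) (x y v : T) : Prop :=
  (x = v \/ r x v) /\ r v y /\ has_cs [set: T] E r y v.

Definition right_reachable (E : rel T) (r : rel T) (x y v : T) : Prop :=
  r x v /\ (v = y \/ r v y) /\ has_cs [set: T] E r v x.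

Definition in_S (E : rel T) (r : rel T) (x y v : T) : Prop :=
  left_reachable E r x y v /\ right_reachable E r x y v.

End OrderedGraphs.

(* Main.v *)
Require Import Defs.
From mathcomp Require Import all_boot.
From Stdlib Require Import FunctionalExtensionality.

Set Implicit Arguments.
Unset Strict Implicit.
Unset Printing Implicit Defensive.

Section Aux.
Variable T : finType.
Variable E : rel T.

Definition le (rho : rel T) (a b : T) := (a == b) || rho a b.

Section Lin.
Variable rho : rel T.
Hypothesis hl : strict_linear_order rho.

Lemma ltT a b c : rho a b -> rho b c -> rho a c.
Proof. case: hl => _ rtr _ h1 h2; exact: (rtr _ _ _ h1 h2). Qed.

Lemma asym a b : rho a b -> rho b a = false.
Proof.
case: hl => rirr _ _ hab; apply/negbTE/negP => hba.
by have := ltT hab hba; rewrite rirr.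
Qed.

Lemma lt_le a b c : rho a b -> le rho b c -> rho a c.
Proof. move=> h /orP[/eqP<-|h2] //; exact: (ltT h h2). Qed.
Lemma le_lt a b c : le rho a b -> rho b c -> rho a c.
Proof. move=> /orP[/eqP->|h1] h //; exact: (ltT h1 h). Qed.
Lemma le_le a b c : le rho a b -> le rho b c -> le rho a c.
Proof. move=> /orP[/eqP->|h1] // h2; apply/orP; right; exact: (lt_le h1 h2). Qed.
Lemma nlt_le a b : ~~ rho a b -> le rho b a.
Proof.
case: hl => _ _ rtot h; rewrite /le; case: (eqVneq b a) => //= nba.
by case/orP: (rtot _ _ nba) => // hab; rewrite hab in h.
Qed.
Lemma lt_nle a b : rho a b -> le rho b a = false.
Proof.
case: hl => rirr _ _ h; rewrite /le asym // orbF; apply/eqP => e.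
by rewrite e rirr in h.
Qed.
End Lin.

Definition walk (rho : rel T) (u v : T) (s : seq (T * T)) : bool :=
  if s is e :: s' then
   [&& all (is_edge [set: T] E rho) s, e.1 == u, (last e s').2 == v
      & path (crosses rho) e s']
  else false.

Section Walks.
Variable rho : rel T.
Hypothesis hl : strict_linear_order rho.

Lemma bounds e s : path (crosses rho) e s ->
  forall f, f \in e :: s -> le rho e.1 f.1 /\ le rho f.2 (last e s).2.
Proof.
elim: s e => [|e' s IH] e /=.
  by move=> _ f; rewrite inE => /eqP ->; rewrite /le !eqxx.
case/andP=> /and3P[h1 h2 h3] hp f; rewrite inE => /orP[/eqP->|hf].
  split; first by rewrite /le eqxx.
  have [_ H] := IH e' hp e' (mem_head _ _).
  apply/orP; right. by exact: (lt_le hl h3 H).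
have [H1 H2] := IH e' hp f hf; split => //.
by apply/orP; right; exact: (lt_le hl h1 H1).
Qed.

Lemma endpoints u v e s : walk rho u v (e :: s) -> forall f, f \in e :: s ->
  [/\ le rho u f.1, le rho u f.2, le rho f.1 v & le rho f.2 v].
Proof.
rewrite /walk => /and4P[hall /eqP hu /eqP hv hp] f hf.
have [H1 H2] := bounds hp hf.
have hf12 : rho f.1 f.2 by have := allP hall f hf; case/and4P.
rewrite -hu -hv; split => //.
- apply/orP; right; exact: (le_lt hl H1 hf12).
- apply/orP; right; exact: (lt_le hl hf12 H2).
Qed.

Lemma find_pref s e u v w : walk rho u v (e :: s) -> rho u w -> rho w v ->
  exists R, [/\ walk rho u (last e R).2 (e :: R), rho (last e R).1 w,
               rho w (last e R).2 & last e R \in e :: s].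
Proof.
elim: s e u => [|e' s IH] e u.
  rewrite /walk /= => /and4P[hall /eqP hu /eqP hv _] huw hwv; subst u v.
  exists [::]; rewrite /walk /= hall !eqxx; split => //.
  by rewrite inE.
rewrite /walk /= => /and4P[/andP[he hall] /eqP hu /eqP hv /andP[hc hp]] huw hwv.
subst u v.
case: (boolP (rho w e.2)) => hw2.
  exists [::]; rewrite /walk /= he !eqxx; split => //.
  by rewrite inE eqxx.
have hle := nlt_le hl hw2.
case/and3P: hc => h1 h2 h3.
have [||R [hw hlw hwl hin]] := IH e' e'.1 _ _ hwv.
- by rewrite /walk /= hall !eqxx hp.
- exact: (lt_le hl h2 hle).
exists (e' :: R); move: hw; rewrite /walk /= => /and4P[hall' _ hv' hp'].
rewrite he hall' eqxx hp' /crosses h1 h2 h3 /=; split => //.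
  by rewrite eqxx.
by rewrite !inE in hin *; rewrite hin orbT.
Qed.

Lemma join_walk Q f u z e R : walk rho f.1 z (f :: Q) ->
  walk rho u (last e R).2 (e :: R) -> crosses rho (last e R) f ->
  walk rho u z (e :: R ++ f :: Q).
Proof.
rewrite /walk /= => /and4P[/andP[hf hQ] _ hz hpQ] /and4P[/andP[he hR] hu _ hpR] hc.
by rewrite all_cat /= he hR hf hQ hu last_cat /= hz cat_path hpR /= hc hpQ.
Qed.

Lemma ext_walk Q f u z e R : walk rho f.1 z (f :: Q) ->
  walk rho u (last e R).2 (e :: R) ->
  rho (last e R).1 f.1 -> rho f.1 (last e R).2 -> le rho (last e R).2 z ->
  exists s, walk rho u z s.
Proof.
move=> + hR + + hz.
elim: Q f => [|f' Q IH] f hQ h1 h2.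
  case: (boolP (rho (last e R).2 f.2)) => h3.
    by exists (e :: R ++ [:: f]); apply: join_walk => //; rewrite /crosses h1 h2 h3.
  move: hQ; rewrite /walk /= => /and4P[_ _ /eqP hfz _].
  move: hz; rewrite /le -hfz => /orP[/eqP ez|hz]; last by rewrite hz in h3.
  by exists (e :: R); rewrite -ez.
case: (boolP (rho (last e R).2 f.2)) => h3.
  by exists (e :: R ++ f :: f' :: Q); apply: join_walk => //; rewrite /crosses h1 h2 h3.
move: (hQ); rewrite /walk /= => /and4P[/andP[_ hQ'] _ hz' /andP[/and3P[c1 c2 c3] hp]].
apply: (IH f').
- by rewrite /walk /= hQ' eqxx hz' hp.
- exact: (ltT hl h1 c1).
- exact: (lt_le hl c2 (nlt_le hl h3)).
Qed.

Lemma concat u v w z P Q : walk rho u v P -> walk rho w z Q ->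
  le rho u w -> rho w v -> le rho v z -> exists s, walk rho u z s.
Proof.
move=> hP hQ /orP[/eqP uw|huw] hwv hvz; first by exists Q; rewrite uw.
move: hvz => /orP[/eqP vz|hvz]; first by exists P; rewrite -vz.
case: P hP => [|e P] // hP.
have [R [hR h1 h2 hin]] := find_pref hP huw hwv.
have [_ _ _ hle] := endpoints hP hin.
case: Q hQ => [|f Q] // hQ.
move: (hQ); rewrite /walk => /and4P[_ /eqP hf _ _]; subst w.
apply: (ext_walk (f := f) (Q := Q) (e := e) (R := R)) => //.
- by apply/orP; right; exact: (le_lt hl hle hvz).
Qed.

Lemma walk_cs u v s : walk rho u v s -> exists s', crossing_seq [set: T] E rho u v s'.
Proof.
case: s => [|e s] //; rewrite /walk => /and4P[hall hu hv hp].
move: hv; case: (shortenP hp) => s' hp' huniq hsub hv.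
exists (e :: s').
have hall' : all (is_edge [set: T] E rho) (e :: s').
  apply/allP => f; rewrite inE => /orP[/eqP->|/hsub hf]; apply: (allP hall).
    by rewrite inE eqxx.
  by rewrite inE hf orbT.
by rewrite /crossing_seq huniq hall' hu hv hp'.
Qed.

End Walks.
End Aux.

Section Aux2.
Variable T : finType.
Variable E : rel T.

Lemma ex_max (rr : rel T) (A : {set T}) a0 : strict_linear_order rr ->
  a0 \in A -> exists2 z, z \in A & forall w, w \in A -> w != z -> rr w z.
Proof.
case=> irr tr tot ha0.
case: (@arg_maxnP _ a0 (mem A) (fun z => #|[set v in A | rr v z]|) ha0) => z hz hmax.
have {}hz : z \in A := hz.
exists z => // w hw nwz.
case/orP: (tot _ _ nwz) => // hzw.
have : #|[set v in A | rr v z]| < #|[set v in A | rr v w]|.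
  apply: proper_card; apply/properP; split.
    apply/subsetP => v; rewrite !inE => /andP[hv hvz]; rewrite hv /=.
    exact: (tr _ _ _ hvz hzw).
  exists z; rewrite !inE; [by rewrite hz hzw | by rewrite irr andbF].
by move: (hmax w hw) => /= hle; rewrite ltnNge hle.
Qed.

Section Cut.
Variable r : rel T.
Hypothesis hl : strict_linear_order r.

Definition cut (U : {set T}) : rel T := fun a b =>
  ((a \in U) && (b \notin U)) || (((a \in U) == (b \in U)) && r a b).
Definition upclosed (U : {set T}) := forall a b, a \in U -> r a b -> b \in U.

Lemma cut_lin U : strict_linear_order (cut U).
Proof.
case: hl => rirr rtr rtot; split.
- by move=> a; rewrite /cut rirr andbN andbF.
- move=> b a c; rewrite /cut.
  case: (a \in U); case: (b \in U); case: (c \in U) => //=;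
   by move=> h1 h2; exact: (rtr _ _ _ h1 h2).
- move=> a b nab; rewrite /cut.
  by case: (a \in U); case: (b \in U) => //=; apply: rtot.
Qed.

Lemma cut0 : cut set0 = r.
Proof.
apply: functional_extensionality => a; apply: functional_extensionality => b.
by rewrite /cut !inE.
Qed.

Lemma cutT (U : {set T}) : (forall v, v \in U) -> cut U = r.
Proof.
move=> hU.
apply: functional_extensionality => a; apply: functional_extensionality => b.
by rewrite /cut !hU.
Qed.

Lemma is_max_cut U z : upclosed U -> z \notin U ->
  (forall w, w \notin U -> w != z -> r w z) ->
  forall v, is_max [set: T] (cut U) v = (v == z).
Proof.
case: (hl) => rirr _ rtot hup hz hmax v; rewrite /is_max in_setT /=.
apply/forallP/eqP => [h|->].
  case: (eqVneq v z) => // nvz; exfalso.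
  have := h z; rewrite in_setT /= /cut (negbTE hz) andbT.
  case: (boolP (v \in U)) => hv //=.
  by rewrite (hmax v hv nvz).
move=> w; rewrite in_setT /cut (negbTE hz) /=.
case: (boolP (w \in U)) => hw //=.
case: (eqVneq w z) => [->|nwz]; first by rewrite rirr.
by rewrite (asym hl (hmax w hw nwz)).
Qed.

Lemma rot_cut U z : upclosed U -> z \notin U ->
  (forall w, w \notin U -> w != z -> r w z) ->
  rot_step [set: T] (cut U) = cut (z |: U) /\ upclosed (z |: U).
Proof.
move=> hup hz hmax; case: (hl) => rirr _ rtot; split.
  apply: functional_extensionality => a; apply: functional_extensionality => b.
  rewrite /rot_step !(is_max_cut hup hz hmax) /cut !in_setU1.
  case: (eqVneq b z) => [->|nbz] /=.
    case: (eqVneq a z) => [->|naz] /=; first by rewrite rirr.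
    case: (boolP (a \in U)) => ha //=.
    by apply/esym/negbTE/negP => haz; rewrite (hup _ _ ha haz) in hz.
  case: (eqVneq a z) => [->|naz] /=.
    case: (boolP (b \in U)) => hb //=.
    apply/esym; case/orP: (rtot _ _ nbz) => // hbz.
    by rewrite (hup _ _ hb hbz) in hz.
  by [].
move=> a b; rewrite !in_setU1 => /orP[/eqP->|ha] hab; last by rewrite (hup _ _ ha hab) orbT.
case: (boolP (b \in U)) => hb; first by rewrite orbT.
case: (eqVneq b z) => [bz|nbz] //.
by rewrite (asym hl (hmax b hb nbz)) in hab.
Qed.

Lemma rot_step_cut (t0 : T) U : upclosed U ->
  exists U', upclosed U' /\ rot_step [set: T] (cut U) = cut U'.
Proof.
move=> hup.
have [U0 [hup0 hU0 [z0 hz0]]] : exists U0, [/\ upclosed U0, cut U = cut U0 & exists z0, z0 \notin U0].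
  case: (pickP (fun v => v \notin U)) => [z0 hz0 | hall].
    by exists U; split => //; exists z0.
  exists set0; split.
  - by move=> a b; rewrite inE.
  - by rewrite cut0 cutT // => v; exact/negbFE/(hall v).
  - by exists t0; rewrite inE.
rewrite hU0.
have hz0' : z0 \in ~: U0 by rewrite inE.
have [z hz hmax] := ex_max hl hz0'.
exists (z |: U0).
have hzn : z \notin U0 by rewrite inE in hz.
have hmax' : forall w, w \notin U0 -> w != z -> r w z.
  by move=> w hw nwz; apply: hmax => //; rewrite inE.
have [h1 h2] := rot_cut hup0 hzn hmax'.
by split.
Qed.

Lemma rotation_cut (t0 : T) k : exists U, upclosed U /\ rotation [set: T] r k = cut U.
Proof.
elim: k => [|k [U [hup hk]]].
  by exists set0; split; [move=> a b; rewrite inE | rewrite /rotation /= cut0].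
have -> : rotation [set: T] r k.+1 = rot_step [set: T] (rotation [set: T] r k) by [].
rewrite hk; exact: rot_step_cut.
Qed.

Lemma cut_rotation n : forall U : {set T}, #|U| = n -> upclosed U ->
  exists k, rotation [set: T] r k = cut U.
Proof.
case: (hl) => rirr rtr rtot.
elim: n => [|n IH] U hU hup.
  exists 0; rewrite /rotation /=.
  have -> : U = set0 by apply/eqP; rewrite -cards_eq0 hU.
  by rewrite cut0.
have [z0 hz0] : exists z0, z0 \in U by apply/set0Pn; rewrite -card_gt0 hU.
have hconv : strict_linear_order (fun a b => r b a).
  split.
  - by move=> a; rewrite rirr.
  - by move=> b a c h1 h2; exact: (rtr _ _ _ h2 h1).
  - by move=> a b nab; rewrite orbC; apply: rtot.
have [z hz hmin] := ex_max hconv hz0.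
have hU0 : #|U :\ z| = n.
  by move: hU; rewrite (cardsD1 z U) hz add1n => -[].
have hup0 : upclosed (U :\ z).
  move=> a b; rewrite !in_setD1 => /andP[naz ha] hab; rewrite (hup _ _ ha hab) andbT.
  apply/eqP => bz; subst b.
  by have := hmin a ha naz; rewrite (asym hl hab).
have [k hk] := IH _ hU0 hup0.
exists k.+1.
have -> : rotation [set: T] r k.+1 = rot_step [set: T] (rotation [set: T] r k) by [].
rewrite hk.
have hzn : z \notin U :\ z by rewrite in_setD1 eqxx.
have hmax' : forall w, w \notin U :\ z -> w != z -> r w z.
  move=> w; rewrite in_setD1 negb_and negbK => /orP[/eqP->|hw]; first by rewrite eqxx.
  move=> nwz; case/orP: (rtot _ _ nwz) => // hzw.
  by rewrite (hup _ _ hz hzw) in hw.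
have [-> _] := rot_cut hup0 hzn hmax'.
by rewrite setD1K.
Qed.

Lemma walk_eq (U1 U2 : {set T}) u v (s : seq (T * T)) :
  (forall f, f \in s -> ((f.1 \in U1) = (f.1 \in U2)) /\ ((f.2 \in U1) = (f.2 \in U2))) ->
  walk E (cut U1) u v s = walk E (cut U2) u v s.
Proof.
have ceq a b : (a \in U1) = (a \in U2) -> (b \in U1) = (b \in U2) -> cut U1 a b = cut U2 a b.
  by rewrite /cut => -> ->.
case: s => [|e s] // hs; rewrite /walk.
have -> : all (is_edge [set: T] E (cut U1)) (e :: s) = all (is_edge [set: T] E (cut U2)) (e :: s).
  apply: eq_in_all => f hf; have [h1 h2] := hs f hf.
  by rewrite /is_edge (ceq _ _ h1 h2).
suff -> : path (crosses (cut U1)) e s = path (crosses (cut U2)) e s by [].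
have : forall f, f \in e :: s -> ((f.1 \in U1) = (f.1 \in U2)) /\ ((f.2 \in U1) = (f.2 \in U2)) by [].
elim: s {hs} e => [|e' s IH] e hs //=.
have [a1 a2] := hs e (mem_head _ _).
have hin : e' \in [:: e, e' & s] by rewrite !inE eqxx orbT.
have [b1 b2] := hs e' hin.
rewrite /crosses (ceq _ _ a1 b1) (ceq _ _ b1 a2) (ceq _ _ a2 b2) IH //.
by move=> f hf; apply: hs; rewrite inE hf orbT.
Qed.

Lemma transfer (U1 Ud : {set T}) u v (s : seq (T * T)) : u \in U1 -> v \notin U1 -> walk E (cut U1) u v s ->
  (forall w, le r u w -> w \in Ud) -> (forall w, le r w v -> w \notin Ud) ->
  walk E (cut Ud) u v s.
Proof.
move=> hu hv hw hA hB.
rewrite -(@walk_eq U1) //.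
case: s hw => [|e s] // hw f hf.
have [h1 h2 h3 h4] := endpoints (cut_lin U1) hw hf.
have key w : le (cut U1) u w -> le (cut U1) w v -> (w \in U1) = (w \in Ud).
  move=> k1 k3; case: (boolP (w \in U1)) => hw1.
    by apply/esym/hA; move: k1; rewrite /le /cut hu hw1.
  by apply/esym/negbTE/hB; move: k3; rewrite /le /cut (negbTE hv) (negbTE hw1).
by rewrite (key _ h1 h3) (key _ h2 h4).
Qed.

End Cut.
End Aux2.

Theorem lemma4p4 (T : finType) (E : rel T) (r : rel T)
  (E_sym : symmetric E) (E_irr : irreflexive E)
  (r_lin : strict_linear_order r)
  (Hfree : H_free E r)
  (x y : T) (xy : r x y) (Hvalid : valid_segment E r x y) :
  capped_on E r (fun v => in_S E r x y v \/ v = x \/ v = y).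
Proof.
have hl := r_lin.
case: (r_lin) => rirr rtr rtot.
have ltT' p q w : r p q -> r q w -> r p w by move=> h1 h2; exact: (rtr _ _ _ h1 h2).
move=> a b c d Pa Pb Pc Pd rab rbc rcd Eac Ebd.
apply/idPn => nEad.
have rac := ltT' _ _ _ rab rbc.
have rad := ltT' _ _ _ rac rcd.
have hpos v : (in_S E r x y v \/ v = x \/ v = y) -> (x = v \/ r x v) /\ (v = y \/ r v y).
  move=> [H|[->|->]].
  - case: H => [[h1 [h2 _]] _]; by split; [exact: h1 | right].
  - by split; [left | right].
  - by split; [right|left].
have [hxa _] := hpos a Pa.
have [_ hdy] := hpos d Pd.
have ray : r a y by case: hdy => [<-|h] //; exact: (ltT' _ _ _ rad h).
have rxd : r x d by case: hxa => [->|h] //; exact: (ltT' _ _ _ h rad).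
have csya : has_cs [set: T] E r y a.
  case: Pa => [[[_ [_ h]] _]|[->|ay]] //.
  by rewrite ay rirr in ray.
have csdx : has_cs [set: T] E r d x.
  case: Pd => [[_ [_ [_ h]]]|[dx|->]] //.
  by rewrite dx rirr in rxd.
have extract u v : r v u -> has_cs [set: T] E r u v ->
    exists U s, [/\ upclosed r U, u \in U, v \notin U & walk E (cut r U) u v s].
  move=> hvu [[huv _]|[_ [k [hk [s hs]]]]]; first by rewrite (asym hl hvu) in huv.
  have [U [hup hU]] := rotation_cut hl x k.
  rewrite hU in hk hs.
  exists U, s; move: hk; rewrite /cut (asym hl hvu) andbF orbF => /andP[hu hv]; split => //.
  by case: s hs => [|e s] //; rewrite /crossing_seq /walk => /andP[_ ->].
have [U1 [s1 [hup1 hd1 hx1 hw1]]] := extract d x rxd csdx.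
have [U2 [s2 [hup2 hy2 ha2 hw2]]] := extract y a ray csya.
pose Ud := [set v | (v == d) || r d v].
have hupd : upclosed r Ud.
  move=> p q; rewrite !inE => /orP[/eqP->|h] hpq; apply/orP; right => //.
  exact: (ltT' _ _ _ h hpq).
have hdUd : d \in Ud by rewrite inE eqxx.
have hnot w : le r w a -> w \notin Ud.
  move=> hwa; rewrite inE negb_or; have hwd := le_lt hl hwa rad.
  apply/andP; split; last by rewrite (asym hl hwd).
  by apply/eqP => e; rewrite e rirr in hwd.
have hxa' : le r x a by case: hxa => [->|h]; rewrite /le ?eqxx ?h ?orbT.
have hdy' : le r d y by case: hdy => [->|h]; rewrite /le ?eqxx ?h ?orbT.
have hnotx w : le r w x -> w \notin Ud by move=> h; apply: hnot; exact: (le_le hl h hxa').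
have hin w : le r d w -> w \in Ud by rewrite /Ud inE /le eq_sym.
have hiny w : le r y w -> w \in Ud by move=> h; apply: hin; exact: (le_le hl hdy' h).
have wP := transfer hl hd1 hx1 hw1 hin hnotx.
have wQ := transfer hl hy2 ha2 hw2 hiny hnot.
have haUd : a \notin Ud by apply: hnot; rewrite /le eqxx.
have hxUd : x \notin Ud by apply: hnotx; rewrite /le eqxx.
have hyUd : y \in Ud by apply: hiny; rewrite /le eqxx.
have c1 : le (cut r Ud) d y.
  by rewrite /le /cut hdUd hyUd /=; case: hdy => [->|->]; rewrite ?eqxx ?orbT.
have c2 : cut r Ud y x by rewrite /cut hyUd hxUd.
have c3 : le (cut r Ud) x a.
  by rewrite /le /cut (negbTE hxUd) (negbTE haUd) /=; case: hxa => [->|->]; rewrite ?eqxx ?orbT.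
have [s hs] := concat (cut_lin hl Ud) wP wQ c1 c2 c3.
have [s' hs'] := walk_cs hs.
have [k hk] := cut_rotation hl (erefl #|Ud|) hupd.
apply: (Hfree [set: T] a d (in_setT a) (in_setT d) nEad).
- left; split => //; exists [:: (a, c); (b, d)].
  have nab : (a, c) != (b, d) by apply/eqP => -[e _]; rewrite e rirr in rab.
  by rewrite /crossing_seq /= /is_edge /crosses /= inE nab !in_setT Eac Ebd rac rab rbc rcd (ltT' _ _ _ rbc rcd) !eqxx.
- right; split => //; exists k; rewrite hk; split; last by exists s'.
  by rewrite /cut hdUd haUd.
Qed.
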